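(* For every integer $s\ge5$, $F_{s,6}(x)=\frac{1}{(s-1)!}\,g_{s,6}(x)\prod_{p=6}^{s}(x-p)$ (an empty product equals $1$), where $g_{s,6}(x)=x^4-(30s-16)x^3+(150s^2-90s+11)x^2-(240s^3-90s^2+4)x+120s^4$.
   Context: For an integer $j\ge0$, $\binom{x}{j}=x(x-1)\cdots(x-j+1)/j!$ as a polynomial in $x$, and $\binom{x}{j}=0$ for $j<0$. For integers $s\ge1$, $k\ge1$, the Moser polynomial is $F_{s,k}(x)=\sum_{p=1}^{s}(-1)^{p-1}p^{k-1}\binom{x}{s-p}$. *)

(* Defs.v *)
From HB Require Import structures.
From mathcomp Require Import all_boot all_order all_algebra.
Set Implicit Arguments. Unset Strict Implicit. Unset Printing Implicit Defensive.
Import Order.TTheory GRing.Theory Num.Theory.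
Local Open Scope ring_scope.

Definition binomp (j : nat) : {poly rat} :=
  (j`!%:R)^-1 *: \prod_(0 <= i < j) ('X - i%:R%:P).

(* Moser polynomial F_{s,k}(x) = sum_{p=1}^{s} (-1)^(p-1) p^(k-1) binom(x, s-p);
   note s - p >= 0 throughout the range, so no truncation occurs. *)
Definition moser (s k : nat) : {poly rat} :=
  \sum_(1 <= p < s.+1) (((-1) ^+ (p.-1) * (p%:R) ^+ (k.-1)) *: binomp (s - p)).

Definition g6 (s : nat) : {poly rat} :=
  let S : rat := s%:R in
  'X^4 - (30 * S - 16)%:P * 'X^3 + (150 * S ^+ 2 - 90 * S + 11)%:P * 'X^2
  - (240 * S ^+ 3 - 90 * S ^+ 2 + 4)%:P * 'X + (120 * S ^+ 4)%:P.

(* Main.v *)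
Require Import Defs.
From HB Require Import structures.
From mathcomp Require Import all_boot all_order all_algebra.
From mathcomp.algebra_tactics Require Import ring.
Import Order.TTheory GRing.Theory Num.Theory.
Local Open Scope ring_scope.

Definition T (s k : nat) : {poly rat} :=
  \sum_(1 <= p < s.+1) (((-1) ^+ (p.-1) * (p%:R) ^+ k) *: binomp (s - p)).

Lemma Trec s k : T s.+1 k = binomp s - \sum_(i < k.+1) 'C(k, i)%:R *: T s i.
Proof.
rewrite /T big_ltn // expr0 expr1n mul1r scale1r subSS subn0 big_add1 /=.
rewrite [X in _ = _ - X](eq_bigr (fun i : 'I_k.+1 => \sum_(1<=p<s.+1)
   ('C(k,i)%:R * ((-1)^+p.-1 * p%:R^+i)) *: binomp (s-p))); last first.
  by move=> i _; rewrite scaler_sumr; apply: eq_bigr => p _; rewrite scalerA.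
rewrite exchange_big /= -sumrN.
congr (_ + _).
apply: eq_big_nat => p /andP [p1 _].
rewrite subSS -scaler_suml -scaleNr; congr (_ *: _).
rewrite -natr1 exprD1n -{1}(prednK p1) exprS /= mulN1r mulNr mulr_sumr -sumrN sumrN; congr (- _).
apply: eq_bigr => i _.
by rewrite -mulr_natl mulrCA.
Qed.
Definition hk (k : nat) (S : {poly rat}) : {poly rat} :=
  match k with
  | 0 => 0 - 120 + 274 * 'X ^+ 1 - 225 * 'X ^+ 2 + 85 * 'X ^+ 3 - 15 * 'X ^+ 4 + 1 * 'X ^+ 5
  | 1 => 0 - 120 * S ^+ 1 + 120 * 'X ^+ 1 + 154 * S ^+ 1 * 'X ^+ 1 - 154 * 'X ^+ 2 - 71 * S ^+ 1 * 'X ^+ 2 + 71 * 'X ^+ 3 + 14 * S ^+ 1 * 'X ^+ 3 - 14 * 'X ^+ 4 - 1 * S ^+ 1 * 'X ^+ 4 + 1 * 'X ^+ 5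
  | 2 => 0 - 120 * S ^+ 2 + 180 * S ^+ 1 * 'X ^+ 1 + 94 * S ^+ 2 * 'X ^+ 1 - 60 * 'X ^+ 2 - 141 * S ^+ 1 * 'X ^+ 2 - 24 * S ^+ 2 * 'X ^+ 2 + 47 * 'X ^+ 3 + 36 * S ^+ 1 * 'X ^+ 3 + 2 * S ^+ 2 * 'X ^+ 3 - 12 * 'X ^+ 4 - 3 * S ^+ 1 * 'X ^+ 4 + 1 * 'X ^+ 5
  | 3 => 0 - 120 * S ^+ 3 - 20 * S ^+ 1 * 'X ^+ 1 + 240 * S ^+ 2 * 'X ^+ 1 + 54 * S ^+ 3 * 'X ^+ 1 + 20 * 'X ^+ 2 - 131 * S ^+ 1 * 'X ^+ 2 - 108 * S ^+ 2 * 'X ^+ 2 - 6 * S ^+ 3 * 'X ^+ 2 + 11 * 'X ^+ 3 + 62 * S ^+ 1 * 'X ^+ 3 + 12 * S ^+ 2 * 'X ^+ 3 - 8 * 'X ^+ 4 - 7 * S ^+ 1 * 'X ^+ 4 + 1 * 'X ^+ 5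
  | 4 => 0 - 120 * S ^+ 4 - 50 * S ^+ 2 * 'X ^+ 1 + 300 * S ^+ 3 * 'X ^+ 1 + 24 * S ^+ 4 * 'X ^+ 1 + 75 * S ^+ 1 * 'X ^+ 2 - 240 * S ^+ 2 * 'X ^+ 2 - 60 * S ^+ 3 * 'X ^+ 2 - 25 * 'X ^+ 3 + 60 * S ^+ 1 * 'X ^+ 3 + 50 * S ^+ 2 * 'X ^+ 3 - 15 * S ^+ 1 * 'X ^+ 4 + 1 * 'X ^+ 5
  | 5 => 0 - 120 * S ^+ 5 + 4 * S ^+ 1 * 'X ^+ 1 - 90 * S ^+ 3 * 'X ^+ 1 + 360 * S ^+ 4 * 'X ^+ 1 - 4 * 'X ^+ 2 - 11 * S ^+ 1 * 'X ^+ 2 + 180 * S ^+ 2 * 'X ^+ 2 - 390 * S ^+ 3 * 'X ^+ 2 + 11 * 'X ^+ 3 - 106 * S ^+ 1 * 'X ^+ 3 + 180 * S ^+ 2 * 'X ^+ 3 + 16 * 'X ^+ 4 - 31 * S ^+ 1 * 'X ^+ 4 + 1 * 'X ^+ 5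
  | _ => 0
  end.
Ltac evbin := repeat match goal with |- context[binomial ?a ?b] =>
  let v := eval vm_compute in (binomial a b) in
  rewrite (_ : binomial a b = v); last by reflexivity end.

Lemma hrec k S : (k <= 5)%N ->
  \prod_(0 <= i < 6) ('X - (i%:R : rat)%:P) - S * \sum_(i < k.+1) 'C(k, i)%:R * hk i S
  = hk k (S + 1) * ('X - S).
Proof.
move=> hk5.
rewrite big_mkord.
case: k hk5 => [|[|[|[|[|[|k]]]]]] // _;
  rewrite !big_ord_recr !big_ord0 /=; evbin; ring.
Qed.

Lemma fact_neq0 n : (n`!%:R : rat) != 0.
Proof. by rewrite pnatr_eq0 -lt0n fact_gt0. Qed.

Lemma binomp_fact j : j`!%:R *: binomp j = \prod_(0 <= i < j) ('X - (i%:R : rat)%:P).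
Proof. by rewrite /binomp scalerA mulfV ?scale1r // fact_neq0. Qed.

Lemma binomp_scale n j : (j <= n)%N ->
  n`!%:R *: binomp j = (n`! %/ j`!)%:R *: \prod_(0 <= i < j) ('X - (i%:R : rat)%:P).
Proof.
move=> hj; rewrite /binomp scalerA; congr (_ *: _).
have e : (n`!%:R : rat) = (n`! %/ j`!)%:R * j`!%:R.
  by rewrite -natrM divnK // (fact_split hj) dvdn_mulr.
by rewrite e mulfK // fact_neq0.
Qed.

Lemma prod_recr n (F : nat -> {poly rat}) :
  \prod_(0 <= i < n.+1) F i = (\prod_(0 <= i < n) F i) * F n.
Proof. by rewrite big_nat_recr. Qed.

Lemma prod0 (F : nat -> {poly rat}) : \prod_(0 <= i < 0) F i = 1.
Proof. by rewrite big_geq. Qed.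

Ltac evnat := repeat match goal with
  | |- context[subn ?a ?b] => let v := eval vm_compute in (subn a b) in
      rewrite (_ : subn a b = v); last by reflexivity
  | |- context[divn ?a ?b] => let v := eval vm_compute in (divn a b) in
      rewrite (_ : divn a b = v); last by reflexivity
  | |- context[predn ?a] => let v := eval vm_compute in (predn a) in
      rewrite (_ : predn a = v); last by reflexivity
  | |- context[factorial ?a] => let v := eval vm_compute in (factorial a) in
      rewrite (_ : factorial a = v); last by reflexivity
  end.

Lemma Tbase n k : 
  n`!%:R *: T n.+1 k = \sum_(1 <= p < n.+2)
    ((-1) ^+ p.-1 * p%:R ^+ k * (n`! %/ (n.+1 - p)`!)%:R)%:P *
     \prod_(0 <= i < n.+1 - p) ('X - (i%:R : rat)%:P).
Proof.
rewrite /T scaler_sumr; apply: eq_big_nat => p /andP [p1 p2].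
transitivity (((-1)^+p.-1 * p%:R^+k) *: (n`!%:R *: binomp (n.+1-p))).
  by rewrite !scalerA [n`!%:R * _]mulrC.
have hj : (n.+1 - p <= n)%N by rewrite leq_subLR -add1n leq_add2r.
by rewrite mul_polyC (binomp_scale _ _ hj) scalerA.
Qed.

Lemma T6 k : (k <= 5)%N -> 5`!%:R *: T 6 k = hk k (6%:R%:P).
Proof.
case: k => [|[|[|[|[|[|k]]]]]] hk5; last by exfalso; move: hk5.
all: rewrite Tbase big_add1 big_mkord !big_ord_recr big_ord0 /=; evnat;
  rewrite !prod_recr !prod0; ring.
Qed.

Lemma Tmain s : (6 <= s)%N -> forall k, (k <= 5)%N ->
  (s.-1)`!%:R *: T s k = hk k (s%:R%:P) * \prod_(6 <= p < s) ('X - (p%:R : rat)%:P).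
Proof.
elim: s => // s IH; rewrite leq_eqVlt => /orP [/eqP <- | hs] k hk5.
  by rewrite big_geq // mulr1 T6.
have hs6 : (6 <= s)%N by [].
rewrite [in RHS]big_nat_recr //= Trec scalerBr scaler_sumr binomp_fact.
rewrite (big_cat_nat (leq0n 6) hs6) /=.
have s0 : (0 < s)%N by apply: leq_trans hs6.
have fs : s`! = (s * (s.-1)`!)%N by rewrite -{1}(prednK s0) factS prednK.
set P := \prod_(6 <= i < s) _.
rewrite (eq_bigr (fun i : 'I_k.+1 => (s%:R)%:P * ('C(k,i)%:R * hk i (s%:R)%:P) * P)); last first.
  move=> i _; rewrite scalerA fs natrM mulrAC -scalerA IH //; last first.
    by apply: leq_trans hk5; rewrite -ltnS.
  rewrite -mul_polyC /P polyCM !polyC_natr; ring.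
rewrite -mulr_suml -mulr_sumr -mulrBl hrec // -natr1 rmorphD /= polyC1.
ring.
Qed.

Lemma h5g s : hk 5 ((s%:R : rat)%:P) = g6 s * ('X - (s%:R)%:P).
Proof. rewrite /hk /g6; ring. Qed.

Lemma T5 : 4`!%:R *: T 5 5 = g6 5.
Proof.
rewrite Tbase /g6 big_add1 big_mkord.
rewrite !big_ord_recr big_ord0 /=.
evnat.
rewrite !prod_recr !prod0.
ring.
Qed.

Theorem mainTheorem9 (s : nat) (hs : (5 <= s)%N) :
  moser s 6 =
  ((s.-1)`!%:R : rat)^-1 *: (g6 s * \prod_(6 <= p < s.+1) ('X - (p%:R : rat)%:P)).
Proof.
have -> : moser s 6 = T s 5 by reflexivity.
apply: (@scalerI _ _ ((s.-1)`!%:R)); first exact: fact_neq0.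
rewrite scalerA (mulfV (fact_neq0 _)) scale1r.
move: hs; rewrite leq_eqVlt => /orP [/eqP <- | hs6].
  rewrite (big_geq (leqnn 6)) mulr1; exact: T5.
rewrite (Tmain _ hs6 _ (leqnn 5)) h5g (big_nat_recr _ _ _ hs6).
rewrite -mulrA; congr (_ * _); exact: mulrC.
Qed.
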